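(* Let $a$ and $b$ be real constants with $a>b>0$. There is a constant $C_0>0$ such that for every $j\in\mathbb{Z}_+$, every $R\ge C_0(j+1)$ and every $\rho>0$, $$\int_{R}^{+\infty}\frac{1}{\tau^{j}}e^{-a|\rho-\tau|-b\tau}\,d\tau\le\left(\frac1a+\frac{2}{a-b}\right)\frac{e^{-b\rho}}{\rho^{j}}.$$ *)

(* Defs.v *)
From HB Require Import structures.
From mathcomp Require Import all_boot all_order all_algebra.
From mathcomp Require Import all_classical all_reals all_analysis.
Set Implicit Arguments. Unset Strict Implicit. Unset Printing Implicit Defensive.

(* Main.v *)
Require Import Defs.
From HB Require Import structures.
From mathcomp Require Import all_boot all_order all_algebra.
From mathcomp Require Import all_classical all_reals all_analysis.
From mathcomp Require Import measurable_realfun.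
From mathcomp Require Import ring lra.
Import Order.TTheory GRing.Theory Num.Theory.
Import numFieldNormedType.Exports.
Local Open Scope classical_set_scope.
Local Open Scope ring_scope.
Section H.
Context {R : realType}.

Lemma dexp_lin (al be ga x : R) :
  is_derive x 1 (fun y => ga * expR (al * (y - be))) (ga * (expR (al * (x - be)) * al)).
Proof.
have h1 : is_derive x 1 (fun y : R => al * (y - be)) (al * (1 - 0)).
  apply: is_deriveZ.
apply: is_deriveZ.
have := @is_derive1_comp R expR (fun y => al * (y - be)) x _ _ (is_derive_expR _) h1.
by rewrite subr0 mulr1.
Qed.

Lemma dexp_lin_derivable (al be ga x : R) :
  derivable (fun y => ga * expR (al * (y - be))) x 1.
Proof. by have [] := dexp_lin al be ga x. Qed.

Lemma dexp_lin_derive1 (al be ga x : R) :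
  derive1 (fun y : R => ga * expR (al * (y - be))) x = ga * (expR (al * (x - be)) * al).
Proof. by rewrite derive1E; have [_ ->] := dexp_lin al be ga x. Qed.

Lemma cont_exp_lin (al be ga : R) : continuous (fun y : R => ga * expR (al * (y - be))).
Proof.
move=> x; apply: differentiable_continuous; rewrite -derivable1_diffP.
exact: dexp_lin_derivable.
Qed.
End H.
Lemma lim_exp_lin {R : realType} (c p ga : R) : 0 < c ->
  (fun y : R => ga * expR ((- c) * (y - p))) x @[x --> +oo] --> 0.
Proof.
move=> c0.
have h : (fun y : R => expR (- (c * (y - p)))) x @[x --> +oo] --> 0.
  apply: (@cvg_comp _ _ _ (fun y => c * (y - p)) (fun z => expR (- z)) _ (pinfty_nbhs R)); last exact: cvgr_expR.
  exact: gt0_cvgMry (cvg_addrr _).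
rewrite -(mulr0 ga).
under eq_fun do rewrite mulNr.
exact: cvgMl_tmp.
Qed.

Lemma tail_int {R : realType} (c p K : R) : 0 < c -> 0 <= K ->
  (\int[lebesgue_measure]_(x in `[p, +oo[) (K * expR ((- c) * (x - p)))%:E
    = (K / c)%:E)%E.
Proof.
move=> c0 K0.
rewrite (@ge0_continuous_FTC2y _ (fun x : R => K * expR ((- c) * (x - p)))
  (fun y : R => (- (K / c)) * expR ((- c) * (y - p))) p 0).
- by rewrite subrr mulr0 expR0 mulr1 sub0e EFinN oppeK.
- by move=> x _; rewrite mulr_ge0 ?expR_ge0.
- have := @cont_exp_lin R (- c) p K.
  by move=> h; apply: continuous_subspaceT.
- exact: lim_exp_lin.
- by move=> x _; exact: dexp_lin_derivable.
- by apply/cvg_at_right_filter; exact: cont_exp_lin.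
- move=> x _; rewrite dexp_lin_derive1.
  by field; rewrite gt_eqF.
Qed.

Lemma fin_int {R : realType} (c p m K : R) : 0 < c -> 0 <= K -> m < p ->
  (\int[lebesgue_measure]_(x in `[m, p]) (K * expR (c * (x - p)))%:E
    <= (K / c)%:E)%E.
Proof.
move=> c0 K0 mp.
rewrite (@continuous_FTC2 _ (fun x : R => K * expR (c * (x - p)))
  (fun y : R => (K / c) * expR (c * (y - p))) m p mp).
- rewrite subrr mulr0 expR0 mulr1 -EFinB lee_fin.
  have : 0 <= K / c * expR (c * (m - p)).
    apply: mulr_ge0; last exact: expR_ge0.
    by apply: divr_ge0 => //; exact: ltW.
  lra.
- have := @cont_exp_lin R c p K.
  by move=> h; apply: continuous_subspaceT.
- split.
  + by move=> x _; exact: dexp_lin_derivable.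
  + by apply/cvg_at_right_filter; exact: cont_exp_lin.
  + by apply/cvg_at_left_filter; exact: cont_exp_lin.
- move=> x _; rewrite dexp_lin_derive1.
  by field; rewrite gt_eqF.
Qed.
Lemma contX {R : realType} (j : nat) (x : R) : {for x, continuous (fun y : R => y ^+ j)}.
Proof.
elim: j => [|j ih].
  have -> : (fun y : R => y ^+ 0) = (fun=> 1) by apply/funext => y; rewrite expr0.
  exact: cst_continuous.
have -> : (fun y : R => y ^+ j.+1) = (fun y => y * y ^+ j) by apply/funext => y; rewrite exprS.
apply: continuousM => //; exact: cvg_id.
Qed.

Lemma meas_g {R : realType} (a b rho : R) (j : nat) :
  measurable_fun (`]0, +oo[ : set R) (fun tau : R => (tau ^+ j)^-1 * expR (- a * `|rho - tau| - b * tau)).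
Proof.
apply: open_continuous_measurable_fun; first exact: interval_open.
move=> x; rewrite inE /= in_itv /= andbT => x0.
apply: (@continuousM _ _ (fun t : R => (t ^+ j)^-1) (fun t => expR (- a * `|rho - t| - b * t))).
  apply: continuousV; first by rewrite expf_neq0 // gt_eqF.
  exact: contX.
apply: (@continuous_comp _ _ _ (fun t : R => - a * `|rho - t| - b * t) expR); last exact: continuous_expR.
apply: (@continuousB _ _ _ (fun t : R => - a * `|rho - t|) (fun t => b * t)).
  apply: (@continuousM _ _ (fun=> - a) (fun t : R => `|rho - t|)); first exact: cst_continuous.
  apply: (@continuous_comp _ _ _ (fun t : R => rho - t) Num.norm); last exact: norm_continuous.
  apply: (@continuousB _ _ _ (fun=> rho) id); first exact: cst_continuous.
  exact: cvg_id.
apply: (@continuousM _ _ (fun=> b) id); first exact: cst_continuous.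
exact: cvg_id.
Qed.
Lemma ptA {R : realType} (a b rho tau : R) (j : nat) :
  0 < b -> b < a -> 0 < tau -> tau < rho -> j%:R <= (a - b) / 2 * tau ->
  (tau ^+ j)^-1 * expR (- a * `|rho - tau| - b * tau)
  <= expR (- b * rho) / rho ^+ j * expR ((a - b) / 2 * (tau - rho)).
Proof.
move=> b0 ab t0 tr hj.
set c := (a - b) / 2.
have r0 : 0 < rho by lra.
rewrite gtr0_norm; last by lra.
set s := (rho - tau) / tau.
have hs : rho = tau * (1 + s) by rewrite /s; field; rewrite gt_eqF.
have s0 : 0 <= s by rewrite /s divr_ge0 //; lra.
have e1 : rho <= tau * expR s by have := expR_ge1Dx s; nra.
have e2 : rho ^+ j <= tau ^+ j * expR (j%:R * s).
  rewrite expRM_natl -exprMn; apply: lerXn2r; rewrite ?nnegrE; try lra.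
have e3 : j%:R * s <= c * (rho - tau).
  have -> : c * (rho - tau) = (c * tau) * s by rewrite /s; field; rewrite gt_eqF.
  by apply: ler_wpM2r.
have e4 : rho ^+ j <= tau ^+ j * expR (c * (rho - tau)).
  apply: (le_trans e2); rewrite ler_pM2l ?exprn_gt0 // ler_expR //.
have E : expR (- a * (rho - tau) - b * tau) * expR (c * (rho - tau))
   = expR (- b * rho) * expR (c * (tau - rho)).
  by rewrite -!expRD /c; congr expR; field.
have P0 : 0 < rho ^+ j by rewrite exprn_gt0.
have T0 : 0 < tau ^+ j by rewrite exprn_gt0.
rewrite [X in X <= _]mulrC [X in _ <= X]mulrAC ler_pdivrMr //.
rewrite [X in _ <= X]mulrAC ler_pdivlMr //.
have := expR_ge0 (- a * (rho - tau) - b * tau).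
rewrite -E.
nra.
Qed.

Lemma ptB {R : realType} (a b rho tau : R) (j : nat) :
  0 < b -> b < a -> 0 < rho -> rho <= tau ->
  (tau ^+ j)^-1 * expR (- a * `|rho - tau| - b * tau)
  <= expR (- b * rho) / rho ^+ j * expR (- a * (tau - rho)).
Proof.
move=> b0 ab r0 rt.
have t0 : 0 < tau by lra.
rewrite ler0_norm; last by lra.
rewrite mulrAC mulrC; apply: ler_pM.
- exact: expR_ge0.
- by rewrite invr_ge0 exprn_ge0 // ltW.
- by rewrite -expRD ler_expR; nra.
- rewrite lef_pV2 ?posrE ?exprn_gt0 //; apply: lerXn2r; rewrite ?nnegrE; lra.
Qed.

Theorem lemma5p7 (R : realType) (a b : R) (hb : 0 < b) (hab : b < a) :
  exists C0 : R, 0 < C0 /\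
    forall (j : nat) (Rr rho : R), C0 * (j.+1)%:R <= Rr -> 0 < rho ->
      (\int[lebesgue_measure]_(tau in `[Rr, +oo[)
          ((tau ^+ j)^-1 * expR (- a * `|rho - tau| - b * tau))%:E
       <= ((a^-1 + 2 / (a - b)) * (expR (- b * rho) / rho ^+ j))%:E)%E.
Proof.
have ab0 : 0 < a - b by lra.
exists (2 / (a - b)); split; first by rewrite divr_gt0.
move=> j Rr rho hR r0.
set c := (a - b) / 2.
have c0 : 0 < c by rewrite /c divr_gt0.
set K := expR (- b * rho) / rho ^+ j.
have K0 : 0 <= K by rewrite /K divr_ge0 ?expR_ge0 // exprn_ge0 // ltW.
have j0 : 0 <= j%:R :> R by [].
have Rr0 : 0 < Rr.
  apply: lt_le_trans hR; apply: mulr_gt0; first by rewrite divr_gt0.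
  by rewrite ltr0n.
have hj : forall tau, Rr <= tau -> j%:R <= c * tau.
  move=> tau hRt.
  have E : c * (2 / (a - b) * (j%:R + 1)) = j%:R + 1 by rewrite /c; field; rewrite gt_eqF.
  have : c * (2 / (a - b) * (j%:R + 1)) <= c * tau.
    by rewrite ler_pM2l // natr1; exact: le_trans hR hRt.
  by rewrite E; lra.
pose g := fun tau : R => (tau ^+ j)^-1 * expR (- a * `|rho - tau| - b * tau).
set L := `]-oo, rho[%classic.
set D := `[Rr, +oo[%classic.
have mD : measurable D by exact: measurable_itv.
have mL : measurable L by exact: measurable_itv.
have DAB : D = (D `&` L) `|` (D `&` ~` L) by rewrite -setIUr setUv setIT.
have DT : D `<=` `]0, +oo[.
  move=> x; rewrite /D /= !in_itv /= !andbT => hx; lra.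
have mg : measurable_fun D (EFin \o g).
  apply/measurable_EFinP; exact: (measurable_funS (measurable_itv _) DT (meas_g a b rho j)).
have g0 : forall x, D x -> (0 <= (EFin \o g) x)%E.
  move=> x /DT; rewrite /= in_itv /= andbT => x0.
  by rewrite lee_fin /g mulr_ge0 ?expR_ge0 // invr_ge0 exprn_ge0 // ltW.
change (\int[lebesgue_measure]_(tau in D) (EFin \o g) tau <= ((a^-1 + 2 / (a - b)) * K)%:E)%E.
have -> : (a^-1 + 2 / (a - b)) * K = K / c + K / a.
  by rewrite /c; field; rewrite !gt_eqF //; lra.
rewrite DAB ge0_integral_setU //; first last.
- by apply/disj_setPS => x [[_ h1] [_ h2]].
- by rewrite -DAB.
- by rewrite -DAB.
- by apply: measurableI => //; exact: measurableC.
- exact: measurableI.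
rewrite EFinD; apply: leeD.
-
  set m := Order.min Rr (rho - 1).
  have mr : m < rho by rewrite /m gt_min; apply/orP; right; lra.
  have hc : measurable_fun setT (fun x : R => K * expR (c * (x - rho))).
    by apply: continuous_measurable_fun; exact: cont_exp_lin.
  have mDL : measurable (D `&` L) by exact: measurableI.
  have h1 := @ge0_le_integral _ _ _ lebesgue_measure (D `&` L) mDL (EFin \o g)
     (fun x => (K * expR (c * (x - rho)))%:E).
  apply: le_trans; first apply: h1.
  + by move=> x [Dx _]; exact: g0.
  + by apply: measurable_funS mg => //; exact: subIsetl.
  + by apply/measurable_EFinP; exact: measurable_funTS.
  + move=> x [Dx Lx]; rewrite lee_fin /g /K.
    move: Dx Lx; rewrite /D /L /= !in_itv /= andbT => hx hxr.
    apply: ptA => //; first lra.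
    by rewrite -/c; exact: hj.
  have h2 := @ge0_subset_integral _ _ _ lebesgue_measure (D `&` L) `[m, rho] mDL
     (measurable_itv _) (fun x => (K * expR (c * (x - rho)))%:E).
  apply: le_trans; first apply: h2.
  + by apply/measurable_EFinP; exact: measurable_funTS.
  + by move=> x _; rewrite lee_fin mulr_ge0 ?expR_ge0.
  + move=> x [Dx Lx]; move: Dx Lx; rewrite /D /L /= !in_itv /= andbT => hx hxr.
    rewrite (ltW hxr) andbT /m ge_min; apply/orP; left; exact: hx.
  exact: fin_int.
-
  have hc : measurable_fun setT (fun x : R => K * expR ((- a) * (x - rho))).
    by apply: continuous_measurable_fun; exact: cont_exp_lin.
  have a0 : 0 < a by lra.
  have mDL : measurable (D `&` ~` L) by apply: measurableI => //; exact: measurableC.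
  have h1 := @ge0_le_integral _ _ _ lebesgue_measure (D `&` ~` L) mDL (EFin \o g)
     (fun x => (K * expR ((- a) * (x - rho)))%:E).
  apply: le_trans; first apply: h1.
  + by move=> x [Dx _]; exact: g0.
  + by apply: measurable_funS mg => //; exact: subIsetl.
  + by apply/measurable_EFinP; exact: measurable_funTS.
  + move=> x [Dx Lx]; rewrite lee_fin /g /K.
    move: Dx Lx; rewrite /D /L /= !in_itv /= andbT => hx hxr.
    apply: ptB => //; rewrite leNgt; exact/negP.
  have h2 := @ge0_subset_integral _ _ _ lebesgue_measure (D `&` ~` L) `[rho, +oo[ mDL
     (measurable_itv _) (fun x => (K * expR ((- a) * (x - rho)))%:E).
  apply: le_trans; first apply: h2.
  + by apply/measurable_EFinP; exact: measurable_funTS.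
  + by move=> x _; rewrite lee_fin mulr_ge0 ?expR_ge0.
  + move=> x [Dx Lx]; move: Lx; rewrite /L /= !in_itv /= andbT => hxr.
    rewrite leNgt; exact/negP.
  by rewrite tail_int.
Qed.
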